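(* Let $\mathcal{A}=\{a,b,c,\overline{a},\overline{b},\overline{c}\}$ and let $\varphi$ be the morphism of $\mathcal{A}^*$ defined by $$\varphi(a)=a\overline{c},\ \varphi(b)=c\overline{b},\ \varphi(c)=b\overline{a},\ \varphi(\overline{a})=ac,\ \varphi(\overline{b})=cb,\ \varphi(\overline{c})=ba,$$ and let $\mathcal{S}_\infty$ be its iterative fixed point beginning with $a$ (the classical Hanoi sequence, $\mathcal{S}_\infty = a\,\overline{c}\,b\,a\,c\,\overline{b}\,a\,\overline{c}\,b\,\overline{a}\,c\,b\cdots$). Let $\xi$ be the (non-uniform) morphism of $\mathcal{A}^*$ defined by $$\xi(a)=a\overline{c}b,\ \xi(b)=\overline{b},\ \xi(c)=\overline{a}c,\ \xi(\overline{a})=acb,\ \xi(\overline{b})=b,\ \xi(\overline{c})=ac.$$ Then $\mathcal{S}_\infty$ is the iterative fixed point of $\xi$ beginning with $a$; in particular the classical Hanoi sequence is non-uniformly pure morphic. Similarly, let $\mathcal{B}=\{a,b,\overline{a},\overline{b}\}$, let $\lambda$ be the morphism of $\mathcal{B}^*$ defined by $$\lambda(a)=aba,\ \lambda(\overline{a})=ab\overline{a},\ \lambda(b)=\overline{b}\,\overline{a}\,b,\ \lambda(\overline{b})=\overline{b}\,\overline{a}\,\overline{b},$$ and let $\mathcal{H}_\infty$ be its iterative fixed point beginning with $a$ (the lazy Hanoi sequence). Let $\eta$ be the (non-uniform) morphism of $\mathcal{B}^*$ defined by $$\eta(a)=aba\overline{b},\ \eta(b)=\overline{a}b,\ \eta(\overline{a})=ab\overline{a}\,\overline{b},\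 \eta(\overline{b})=\overline{a}\,\overline{b}.$$ Then $\mathcal{H}_\infty$ is the iterative fixed point of $\eta$ beginning with $a$; in particular the lazy Hanoi sequence is non-uniformly pure morphic.
   Context: For a finite alphabet $\mathcal{A}$, $\mathcal{A}^*$ is the free monoid of finite words under concatenation; a morphism $\sigma$ of $\mathcal{A}^*$ satisfies $\sigma(uv)=\sigma(u)\sigma(v)$ and is extended to infinite sequences letterwise. A morphism is $k$-uniform if all images of letters have length $k$; it is non-uniform otherwise. If $\sigma(a_0)=a_0x$ with $\sigma^\ell(x)$ nonempty for all $\ell$, then the words $\sigma^\ell(a_0)$ converge (have longer and longer common prefixes) to an infinite sequence, called the iterative fixed point of $\sigma$ beginning with $a_0$. A sequence is non-uniformly pure morphic if it is the iterative fixed point of a non-uniform morphism. (The letters $a,b,c$ denote the Tower of Hanoi moves peg I→II, II→III, III→I and the barred letters their inverses; $\mathcal{S}_\infty$ is the infinite sequence of moves of the optimal recursive solution, and $\mathcal{H}_\infty$ that of the lazy Tower of Hanoi using only moves $a,\overline a,b,\overline b$.) *)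

(* Defs.v *)
From mathcomp Require Import all_boot.
Set Implicit Arguments. Unset Strict Implicit. Unset Printing Implicit Defensive.

Definition morph_of {A : Type} (sigma : A -> seq A) (w : seq A) : seq A :=
  flatten (map sigma w).

Definition uniform {A : Type} (sigma : A -> seq A) : Prop :=
  exists k : nat, forall x : A, size (sigma x) = k.

Definition non_uniform {A : Type} (sigma : A -> seq A) : Prop := ~ uniform sigma.

Definition is_iter_fixed_point {A : Type} (sigma : A -> seq A) (a0 : A)
    (u : nat -> A) : Prop :=
  (exists x : seq A, sigma a0 = a0 :: x /\
      forall l : nat, iter l (morph_of sigma) x <> [::]) /\
  forall n : nat, exists L : nat, forall l : nat, L <= l ->
      n < size (iter l (morph_of sigma) [:: a0]) /\
      nth a0 (iter l (morph_of sigma) [:: a0]) n = u n.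

Definition non_uniformly_pure_morphic {A : Type} (u : nat -> A) : Prop :=
  exists (sigma : A -> seq A) (a0 : A),
    non_uniform sigma /\ is_iter_fixed_point sigma a0 u.

(* Alphabet {a,b,c,abar,bbar,cbar} *)
Inductive A6 : Type := Ha | Hb | Hc | Hab | Hbb | Hcb.

Definition phi (x : A6) : seq A6 :=
  match x with
  | Ha => [:: Ha; Hcb] | Hb => [:: Hc; Hbb] | Hc => [:: Hb; Hab]
  | Hab => [:: Ha; Hc] | Hbb => [:: Hc; Hb] | Hcb => [:: Hb; Ha]
  end.

Definition xi (x : A6) : seq A6 :=
  match x with
  | Ha => [:: Ha; Hcb; Hb] | Hb => [:: Hbb] | Hc => [:: Hab; Hc]
  | Hab => [:: Ha; Hc; Hb] | Hbb => [:: Hb] | Hcb => [:: Ha; Hc]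
  end.

(* Alphabet {a,b,abar,bbar} *)
Inductive B4 : Type := La | Lb | Lab | Lbb.

Definition lambda (x : B4) : seq B4 :=
  match x with
  | La => [:: La; Lb; La] | Lab => [:: La; Lb; Lab]
  | Lb => [:: Lbb; Lab; Lb] | Lbb => [:: Lbb; Lab; Lbb]
  end.

Definition eta (x : B4) : seq B4 :=
  match x with
  | La => [:: La; Lb; La; Lbb] | Lb => [:: Lab; Lb]
  | Lab => [:: La; Lb; Lab; Lbb] | Lbb => [:: Lab; Lbb]
  end.

(* Main.v *)
Require Import Defs.
From mathcomp Require Import all_boot.
Set Implicit Arguments. Unset Strict Implicit.

Definition pre {T : Type} (u v : seq T) := exists t, v = u ++ t.

Lemma pre_refl T (u : seq T) : pre u u.
Proof. by exists [::]; rewrite cats0. Qed.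

Lemma pre_trans T (u v w : seq T) : pre u v -> pre v w -> pre u w.
Proof. by move=> [t ->] [t' ->]; exists (t ++ t'); rewrite catA. Qed.

Lemma morph_cat T (s : T -> seq T) u v :
  morph_of s (u ++ v) = morph_of s u ++ morph_of s v.
Proof. by rewrite /morph_of map_cat flatten_cat. Qed.

Lemma morph_cons T (s : T -> seq T) x w :
  morph_of s (x :: w) = s x ++ morph_of s w.
Proof. by []. Qed.

Lemma morph_nil T (s : T -> seq T) : morph_of s [::] = [::].
Proof. by []. Qed.

Lemma pre_morph T (s : T -> seq T) u v : pre u v -> pre (morph_of s u) (morph_of s v).
Proof. by move=> [t ->]; exists (morph_of s t); rewrite morph_cat. Qed.

Lemma nth_pre T (x0 : T) u v n : pre u v -> n < size u -> nth x0 v n = nth x0 u n.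
Proof. by move=> [t ->] Hn; rewrite nth_cat Hn. Qed.

Lemma size_morph_ge T (s : T -> seq T) w :
  (forall x, 0 < size (s x)) -> size w <= size (morph_of s w).
Proof.
move=> Hs; elim: w => [|x w IH] //=.
rewrite morph_cons size_cat.
have := Hs x; case: (size (s x)) => // k _.
by rewrite addSn ltnS (leq_trans IH) // leq_addl.
Qed.

Lemma iter_grow T (s : T -> seq T) (a0 : T) u :
  (forall x, 0 < size (s x)) -> s a0 = a0 :: u -> 0 < size u ->
  forall l, exists t, iter l (morph_of s) [:: a0] = a0 :: t /\ l <= size t.
Proof.
move=> Hs Ha Hu; elim=> [|l [t [Ht Hl]]]; first by exists [::].
rewrite /= Ht morph_cons Ha.
exists (u ++ morph_of s t); split => //.
rewrite size_cat; have := size_morph_ge t Hs.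
case: (size u) Hu => // k _ H.
by rewrite addSn ltnS (leq_trans Hl) // (leq_trans H) // leq_addl.
Qed.

Lemma iter_nonempty T (s : T -> seq T) u :
  (forall x, 0 < size (s x)) -> 0 < size u -> forall l, iter l (morph_of s) u <> [::].
Proof.
move=> Hs Hu l; have : 0 < size (iter l (morph_of s) u).
  elim: l => //= l IH; exact: leq_trans IH (size_morph_ge _ Hs).
by case: (iter l (morph_of s) u).
Qed.

Lemma tele T (p q : T -> seq T) (nxt : rel T) (d g : T -> seq T) :
  (forall x, morph_of q (p x) ++ d x = g x ++ morph_of p (q x)) ->
  (forall x y, nxt x y -> d x = g y) ->
  forall w x, path nxt x w ->
    morph_of q (morph_of p (x :: w)) ++ d (last x w)
    = g x ++ morph_of p (morph_of q (x :: w)).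
Proof.
move=> Hc Hl; elim=> [|y w IH] x /=.
  by move=> _; rewrite !morph_cons !morph_nil !cats0 Hc.
move=> /andP [Hxy Hp].
rewrite morph_cons morph_cat -catA IH // catA -(Hl _ _ Hxy) Hc.
by rewrite -catA [morph_of q (x :: _)]morph_cons morph_cat.
Qed.

Lemma chainP T (p : T -> seq T) (nxt : rel T) :
  (forall x, p x = head x (p x) :: behead (p x)) ->
  (forall x, path nxt (head x (p x)) (behead (p x))) ->
  (forall x y, nxt x y -> nxt (last (head x (p x)) (behead (p x))) (head y (p y))) ->
  forall w x, path nxt x w -> path nxt (head x (p x)) (behead (p x) ++ morph_of p w).
Proof.
move=> Hne H1 H2; elim=> [|y w IH] x /=.
  by move=> _; rewrite morph_nil cats0.
move=> /andP [Hxy Hp].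
rewrite morph_cons (Hne y) cat_cons cat_path H1 /= H2 //=.
exact: IH.
Qed.

Lemma generic T (p q : T -> seq T) (a0 : T) (nxt : rel T) (d g : T -> seq T) :
  (forall x, p x = head x (p x) :: behead (p x)) ->
  (forall x, path nxt (head x (p x)) (behead (p x))) ->
  (forall x y, nxt x y -> nxt (last (head x (p x)) (behead (p x))) (head y (p y))) ->
  (forall x, morph_of q (p x) ++ d x = g x ++ morph_of p (q x)) ->
  (forall x y, nxt x y -> d x = g y) ->
  g a0 = [::] ->
  (forall x, 0 < size (p x)) -> (forall x, 0 < size (q x)) ->
  (exists u, p a0 = a0 :: u /\ 0 < size u) ->
  (exists u, q a0 = a0 :: u /\ 0 < size u) ->
  pre (q a0) (iter 2 (morph_of p) [:: a0]) ->
  (exists S, is_iter_fixed_point p a0 S) /\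
  (forall S, is_iter_fixed_point p a0 S -> is_iter_fixed_point q a0 S).
Proof.
move=> Hne H1 H2 Hc Hl Hg0 Hp Hq [u [Hpa Hu]] [v [Hqa Hv]] Hbase.
pose W m := iter m (morph_of p) [:: a0].
have Wch : forall m, exists t, W m = a0 :: t /\ path nxt a0 t.
  elim=> [|m [t [Ht Hpt]]]; first by exists [::].
  rewrite /W /= -/(W m) Ht morph_cons (Hne a0).
  exists (behead (p a0) ++ morph_of p t); split; first by rewrite Hpa.
  have := chainP Hne H1 H2 Hpt; by rewrite Hpa.
have Wmon : forall m k, pre (W m) (W (k + m)).
  move=> m; elim=> [|k IH]; first exact: pre_refl.
  rewrite addSn /W /=; rewrite -/(W (k + m)).
  apply: pre_trans IH _.
  elim: (k + m) => [|j IHj].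
    by rewrite /W /= morph_cons Hpa morph_nil cats0; exists u.
  exact: (pre_morph p IHj).
have XW : forall m, pre (morph_of q (W m)) (W m.+2).
  elim=> [|m IH]; first by rewrite /W /= morph_cons morph_nil cats0.
  have [t [Ht Hpt]] := Wch m.
  have Et := tele Hc Hl Hpt; rewrite Hg0 cat0s -Ht in Et.
  apply: (@pre_trans _ _ (morph_of p (morph_of q (W m)))).
    by exists (d (last a0 t)); rewrite -Et.
  exact: pre_morph.
pose Y l := iter l (morph_of q) [:: a0].
have YW : forall l, pre (Y l) (W (l + l)).
  elim=> [|l IH]; first exact: pre_refl.
  rewrite addSn addnS /Y /= -/(Y l).
  exact: pre_trans (pre_morph q IH) (XW _).
have Wsz : forall n l, n < l -> n < size (W l).
  move=> n l Hnl; have [t [Ht Hs]] := iter_grow Hp Hpa Hu l.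
  by rewrite /W Ht /= ltnS (leq_trans (ltnW Hnl) Hs).
split.
  exists (fun n => nth a0 (W n.+1) n); split.
    by exists u; split => //; apply: iter_nonempty.
  move=> n; exists n.+1 => l Hll; split; first exact: Wsz.
  have -> : l = (l - n.+1) + n.+1 by rewrite subnK.
  apply: nth_pre; [exact: Wmon | exact: Wsz].
move=> S [_ HS]; split.
  by exists v; split => //; apply: iter_nonempty.
move=> n; have [L HL] := HS n; exists (n + L) => l Hll.
have Ysz : n < size (Y l).
  have [t [Ht Hs]] := iter_grow Hq Hqa Hv l.
  by rewrite /Y Ht /= ltnS (leq_trans _ Hs) // (leq_trans (leq_addr L n)).
split => //.
have HL2 : L <= l + l.
  by rewrite (leq_trans _ (leq_addl l l)) // (leq_trans (leq_addl n L)).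
have [_ <-] := HL (l + l) HL2.
by rewrite (nth_pre _ (YW l)).
Qed.

Definition und6 (x : A6) : nat :=
  match x with Ha | Hab => 0 | Hc | Hcb => 1 | Hb | Hbb => 2 end.
Definition nxt6 : rel A6 := fun x y => und6 y == (und6 x).+1 %% 3.
Definition d6 (x : A6) : seq A6 :=
  match x with Ha | Hab => [:: Hbb] | Hb | Hbb => [::] | Hc | Hcb => [:: Hab] end.
Definition g6 (x : A6) : seq A6 :=
  match x with Ha | Hab => [::] | Hb | Hbb => [:: Hab] | Hc | Hcb => [:: Hbb] end.

Definition und4 (x : B4) : bool := match x with La | Lab => true | _ => false end.
Definition nxt4 : rel B4 := fun x y => und4 x != und4 y.
Definition d4 (x : B4) : seq B4 :=
  match x with La | Lab => [:: Lab; Lbb] | _ => [::] end.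
Definition g4 (x : B4) : seq B4 :=
  match x with La | Lab => [::] | _ => [:: Lab; Lbb] end.

Lemma part1 :
  (exists S : nat -> A6, is_iter_fixed_point phi Ha S) /\
  (forall S, is_iter_fixed_point phi Ha S -> is_iter_fixed_point xi Ha S).
Proof.
apply: (@generic _ phi xi Ha nxt6 d6 g6).
- by case.
- by case.
- by do 2 case.
- by case.
- by do 2 case.
- by [].
- by case.
- by case.
- by exists [:: Hcb].
- by exists [:: Hcb; Hb].
- by exists [:: Ha].
Qed.

Lemma part2 :
  (exists S : nat -> B4, is_iter_fixed_point lambda La S) /\
  (forall S, is_iter_fixed_point lambda La S -> is_iter_fixed_point eta La S).
Proof.
apply: (@generic _ lambda eta La nxt4 d4 g4).
- by case.
- by case.
- by do 2 case.
- by case.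
- by do 2 case.
- by [].
- by case.
- by case.
- by exists [:: Lb; La].
- by exists [:: Lb; La; Lbb].
- by exists [:: Lab; Lb; La; Lb; La].
Qed.

Theorem mainTheorem1 :
  ((exists S : nat -> A6, is_iter_fixed_point phi Ha S) /\
   non_uniform xi /\
   (forall S : nat -> A6, is_iter_fixed_point phi Ha S ->
      is_iter_fixed_point xi Ha S /\ non_uniformly_pure_morphic S)) /\
  ((exists H : nat -> B4, is_iter_fixed_point lambda La H) /\
   non_uniform eta /\
   (forall H : nat -> B4, is_iter_fixed_point lambda La H ->
      is_iter_fixed_point eta La H /\ non_uniformly_pure_morphic H)).
Proof.
have nu1 : non_uniform xi by move=> [k Hk]; have := Hk Ha; rewrite -(Hk Hb).
have nu2 : non_uniform eta by move=> [k Hk]; have := Hk La; rewrite -(Hk Lb).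
have [e1 f1] := part1; have [e2 f2] := part2.
split; (split; [done | split; [done |]]) => S HS.
  split; first exact: f1.
  by exists xi, Ha; split => //; exact: f1.
split; first exact: f2.
by exists eta, La; split => //; exact: f2.
Qed.
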